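(* Let $F$ be a field of prime characteristic $p$, let $1\le r\le s$, let $m\ge0$ be the smallest integer with $r\le p^m$, let $A=F[X,Y]/(X^r,Y^s)$ with $x,y$ the images of $X,Y$, and regard $A$ as a module over the subalgebra $F[x+y]$. (a) If $s\equiv0\pmod{p^m}$, then $(x+y)^s=0$, $A=\bigoplus_{i=0}^{r-1} x^iF[x+y]$, and $x^i(x+y)^{s-1}\neq 0$ for $0\leq i<r$. Consequently $\varepsilon(r,s,p)=(0,0,\dots,0)$. (b) If $\varepsilon(r,s,p)=(0,0,\dots,0)$, then $s\equiv0\pmod{p^m}$.
   Context: For a positive integer $n$, let $J_n$ denote the $n\times n$ matrix with $1$s in positions $(i,i)$ for $1\le i\le n$ and $(i,i+1)$ for $1\le i<n$, and $0$s elsewhere. For $1\le r\le s$, the Jordan canonical form of $J_r\otimes J_s$ over a field of characteristic $p$ is $J_{\lambda_1}\oplus\cdots\oplus J_{\lambda_r}$ with $\lambda_1\ge\cdots\ge\lambda_r>0$; write $\lambda(r,s,p)=(\lambda_1,\dots,\lambda_r)$. The deviation vector is $\varepsilon(r,s,p)=(\lambda_1-s,\dots,\lambda_r-s)$. *)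

(* Defs.v *)
From HB Require Import structures.
From mathcomp Require Import all_boot all_order all_algebra.
From mathcomp Require Import mxtens.
Set Implicit Arguments. Unset Strict Implicit. Unset Printing Implicit Defensive.
Import Order.TTheory GRing.Theory Num.Theory.
Local Open Scope ring_scope.

Section Defs.
Variable F : fieldType.

Definition jordan_mx (n : nat) : 'M[F]_n :=
  \matrix_(i < n, j < n) (((i : nat) == j) || ((j : nat) == i.+1))%:R.

(* J_r (x) J_s, the Kronecker product (row index (i,k) |-> i*s + k) *)
Definition JJ (r s : nat) : 'M[F]_(r * s) := tensmx (jordan_mx r) (jordan_mx s).

Definition jordan_blocks (lam : seq nat) :=
  mxdiag (fun i : 'I_(size lam) => jordan_mx (nth 0%N lam i)).

Definition jordan_type (n : nat) (M : 'M[F]_n) (lam : seq nat) : Prop :=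
  sorted geq lam /\ all (fun l => 0 < l)%N lam /\
  exists (P : 'M[F]_(\sum_(i < size lam) nth 0%N lam i, n))
         (Q : 'M[F]_(n, \sum_(i < size lam) nth 0%N lam i)),
    P *m Q = 1%:M /\ Q *m P = 1%:M /\ P *m M *m Q = jordan_blocks lam.

Definition deviation (s : nat) (lam : seq nat) : seq int :=
  [seq (l%:Z - s%:Z)%R | l <- lam].

(* The algebra A = F[X,Y]/(X^r, Y^s), modelled on F[X][Y] = {poly {poly F}}:
   x is the inner variable X, y the outer variable Y; equality in A is
   congruence modulo the ideal (X^r, Y^s). *)
Definition xA : {poly {poly F}} := ('X : {poly F})%:P.
Definition yA : {poly {poly F}} := 'X.

Definition congA (r s : nat) (P Q : {poly {poly F}}) : Prop :=
  exists U V : {poly {poly F}}, P - Q = xA ^+ r * U + yA ^+ s * V.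

Definition evalT (f : {poly F}) : {poly {poly F}} :=
  (map_poly (fun c : F => c%:P%:P) f).[xA + yA].

End Defs.

(* Main.v *)
Require Import Defs.
From HB Require Import structures.
From mathcomp Require Import all_boot all_order all_algebra.
From mathcomp Require Import mxtens.
From mathcomp Require Import zify ring.
Set Implicit Arguments. Unset Strict Implicit. Unset Printing Implicit Defensive.
Import Order.TTheory GRing.Theory Num.Theory.
Local Open Scope ring_scope.

Section P1.
Variable F : fieldType.
Local Notation PP := {poly {poly F}}.

Lemma xAn n : xA F ^+ n = ('X^n : {poly F})%:P.
Proof. by rewrite /xA rmorphXn. Qed.

Lemma congA0P r s (P : PP) :
  congA r s P 0 <-> (forall i j, (i < r)%N -> (j < s)%N -> (P`_j)`_i = 0).
Proof.
split.
  move=> [U [V]]; rewrite subr0 => -> i j ir js.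
  rewrite coefD xAn coefCM /yA coefXnM js addr0.
  by rewrite coefXnM ir.
move=> H; rewrite /congA subr0.
exists (\poly_(j < s) drop_poly r (P`_j)), (drop_poly s P).
apply/polyP => j.
rewrite coefD xAn coefCM coef_poly /yA coefXnM.
rewrite -{1}(poly_take_drop s P) coefD coefMXn coef_take_poly.
case: ltnP => js.
  rewrite addr0 -{1}(poly_take_drop r (P`_j)).
  have -> : take_poly r P`_j = 0.
    apply/polyP => i; rewrite coef_take_poly coef0.
    by case: ltnP => // ir; rewrite H.
  by rewrite add0r addr0 mulrC.
by rewrite mulr0.
Qed.

Lemma congA_sub r s (P Q : PP) : congA r s P Q <-> congA r s (P - Q) 0.
Proof. by rewrite /congA subr0. Qed.

Lemma congAM r s (P Q : PP) : congA r s P 0 -> congA r s (P * Q) 0.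
Proof.
move=> [U [V]]; rewrite !subr0 => ->.
by rewrite /congA subr0; exists (U * Q), (V * Q); rewrite mulrDl !mulrA.
Qed.

End P1.

Section P2.
Variable F : fieldType.
Local Notation PP := {poly {poly F}}.

Lemma coef_lin (R : comNzRingType) n (c d : R) j :
  (('X * c%:P + d%:P : {poly R}) ^+ n)`_j =
    if (j <= n)%N then (c ^+ j * d ^+ (n - j)) *+ 'C(n, j) else 0.
Proof.
rewrite addrC exprDn coef_sum.
rewrite (eq_bigr (fun i : 'I_n.+1 => if (i == j :> nat) then
   (c ^+ j * d ^+ (n - j)) *+ 'C(n, j) else 0)); last first.
  move=> i _; rewrite coefMn.
  have -> : (d%:P ^+ (n - i) * ('X * c%:P) ^+ i : {poly R}) = (c ^+ i * d ^+ (n - i))%:P * 'X^i.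
    by rewrite rmorphM /= !rmorphXn /= exprMn mulrCA mulrC; congr (_ * _); rewrite mulrC.
  rewrite coefMXn coefC; case: (ltnP j i) => ji.
    by rewrite gtn_eqF // mul0rn.
  case: (eqVneq (i:nat) j) => [<-|nij]; first by rewrite subnn.
  by rewrite ifF ?mul0rn // subn_eq0 leqNgt ltn_neqAle ji andbT negbK; exact: negbTE.
set K := c ^+ j * d ^+ (n - j) *+ 'C(n, j).
rewrite -(big_mkcond (fun i : 'I_n.+1 => (i:nat) == j) (fun _ => K)).
by rewrite (big_ord1_eq _ (fun=> K) j n.+1) ltnS.
Qed.


Lemma coef_1X (R : comNzRingType) n k : (((1 + 'X : {poly R}) ^+ n)`_k) = ('C(n, k))%:R.
Proof.
have -> : (1 + 'X : {poly R}) = 'X * 1%:P + 1%:P by rewrite rmorph1 mulr1 addrC.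
rewrite coef_lin !expr1n mulr1; case: leqP => // kn.
by rewrite bin_small.
Qed.

Variables (p : nat) (hchar : p \in [pchar F]).

Lemma binom_frob e t k :
  ('C(p ^ e * t, k))%:R = (if (p ^ e %| k)%N then ('C(t, k %/ p ^ e))%:R else 0 : F).
Proof.
have hp : prime p by exact: pcharf_prime hchar.
have pq : (0 < p ^ e)%N by rewrite expn_gt0 prime_gt0.
have hc : p \in [pchar {poly F}] by rewrite pchar_poly.
have hn : (GRing.pchar {poly F}).-nat (p ^ e)%N.
  by rewrite (eq_pnat _ (pcharf_eq hc)) pnatX pnat_id.
rewrite -coef_1X exprM exprDn_pchar // expr1n.
have -> : (1 + 'X ^+ (p ^ e) : {poly F}) ^+ t = ((1 + 'X) ^+ t) \Po 'X^(p ^ e).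
  by rewrite rmorphXn /= rmorphD /= comp_polyC comp_polyX.
by rewrite coef_comp_poly_Xn // coef_1X.
Qed.


Lemma binom_van m s k : (p ^ m %| s)%N -> (0 < k < p ^ m)%N -> ('C(s, k))%:R = 0 :> F.
Proof.
move=> hd /andP[k0 km]; rewrite -(divnK hd) mulnC binom_frob ifF //.
by apply/negbTE; apply/negP => /(dvdn_leq k0); rewrite leqNgt km.

Qed.

Lemma binom_nz e t : ~~ (p %| t)%N -> ('C(p ^ e * t, p ^ e))%:R != 0 :> F.
Proof.
move=> nd; have hp : prime p by exact: pcharf_prime hchar.
have pq : (0 < p ^ e)%N by rewrite expn_gt0 prime_gt0.
by rewrite binom_frob dvdnn divnn pq bin1 -(dvdn_pcharf hchar).
Qed.

End P2.

Section PC.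
Variable F : fieldType.
Local Notation PP := {poly {poly F}}.

Definition uA : PP := (1 + xA F) * (1 + yA F) - 1.

Lemma tE : xA F + yA F = 'X * 1%:P + ('X)%:P.
Proof. by rewrite /xA /yA rmorph1 mulr1 addrC. Qed.

Lemma uE : uA = 'X * (1 + 'X)%:P + ('X)%:P.
Proof. by rewrite /uA /xA /yA rmorphD rmorph1 /=; ring. Qed.

Lemma coef_xw i (w : PP) al be :
  ((xA F ^+ i * w)`_be)`_al = if (al < i)%N then 0 else (w`_be)`_(al - i).
Proof. by rewrite xAn coefCM coefXnM. Qed.

Lemma coef0_pow (c : {poly F}) j : c`_0 = 1 -> (c ^+ j)`_0 = 1.
Proof.
move=> h; elim: j => [|j IH]; first by rewrite expr0 coef1.
by rewrite exprS coef0M h IH mulr1.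
Qed.

Lemma tri_lin (c d : {poly F}) i j : c`_0 = 1 ->
  ((xA F ^+ i * ('X * c%:P + d%:P) ^+ j)`_j)`_i = 1 /\
  (forall al be, ((xA F ^+ i * ('X * c%:P + d%:P) ^+ j)`_be)`_al != 0 ->
       (be < j)%N \/ (be = j /\ (i <= al)%N)).
Proof.
move=> hc; split.
  by rewrite coef_xw ltnn subnn coef_lin leqnn subnn expr0 mulr1 binn coef0_pow.
move=> al be; rewrite coef_xw; case: ltnP => [_|ial]; first by rewrite eqxx.
rewrite coef_lin; case: (ltngtP be j) => [bj|bj|->] /=; [by left | by rewrite coef0 eqxx | by right].
Qed.

Lemma coef_t n al be : (((xA F + yA F) ^+ n)`_be)`_al =
  if (be <= n)%N then ((al == (n - be)%N)%:R *+ 'C(n, be)) else 0.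
Proof.
rewrite tE coef_lin; case: leqP => _; last by rewrite coef0.
by rewrite expr1n mul1r coefMn coefXn.
Qed.

Lemma coef_u n al be : ((uA ^+ n)`_be)`_al =
  if (be <= n)%N then (((1 + 'X) ^+ be * 'X ^+ (n - be)%N)`_al *+ 'C(n, be)) else 0.
Proof. by rewrite uE coef_lin; case: leqP => _; rewrite ?coef0 // coefMn. Qed.

Variables (p : nat) (hchar : p \in [pchar F]) (r s m : nat).
Hypotheses (hr : (1 <= r)%N) (hrs : (r <= s)%N) (hm : (r <= p ^ m)%N)
  (hmmin : forall k : nat, (r <= p ^ k)%N -> (m <= k)%N).

Lemma A1 : (p ^ m %| s)%N -> congA r s ((xA F + yA F) ^+ s) 0.
Proof.
move=> hd; apply/congA0P => al be alr bes.
rewrite coef_t ltnW //; case: eqVneq => [e|_]; last by rewrite mul0rn.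
rewrite -mulr_natr -bin_sub ?(ltnW bes) // (binom_van hchar hd) ?mulr0 //.
apply/andP; split; [by rewrite subn_gt0 | by rewrite -e; apply: leq_trans hm].
Qed.

Lemma A4 i : (i < r)%N -> ~ congA r s (xA F ^+ i * (xA F + yA F) ^+ s.-1) 0.
Proof.
move=> ir /congA0P H.
have h1 : (1 : {poly F})`_0 = 1 by rewrite coef1.
have hs : (s.-1 < s)%N by rewrite ltn_predL (leq_trans hr hrs).
have := H i s.-1 ir hs; rewrite tE (proj1 (tri_lin ('X) i s.-1 h1)).
by move/eqP; rewrite oner_eq0.
Qed.

Lemma U0 : (p ^ m %| s)%N -> congA r s (uA ^+ s) 0.
Proof.
move=> hd; apply/congA0P => al be alr bes.
rewrite coef_u ltnW // coefMXn; case: ltnP => [//|h]; first by rewrite mul0rn.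
rewrite -mulr_natr -bin_sub ?(ltnW bes) // (binom_van hchar hd) ?mulr0 //.
apply/andP; split; [by rewrite subn_gt0 | by apply: leq_ltn_trans h _; apply: leq_trans alr hm].
Qed.

Lemma Bn : congA r s (uA ^+ s) 0 -> (p ^ m %| s)%N.
Proof.
move=> hc; apply/negPn/negP => nd.
have hp : prime p by exact: pcharf_prime hchar.
have s0 : (0 < s)%N by apply: leq_trans hr hrs.
have [t ct st] := pfactor_coprime hp s0.
set e := logn p s in st.
have pt : ~~ (p %| t)%N by rewrite -prime_coprime.
have qr : (p ^ e < r)%N.
  rewrite ltnNge; apply/negP => rq; move/negP: nd; apply.
  by rewrite st dvdn_mull // dvdn_exp2l // hmmin.
have q0 : (0 < p ^ e)%N by rewrite expn_gt0 prime_gt0.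
have qs : (p ^ e <= s)%N by rewrite [X in (_ <= X)%N]st leq_pmull // lt0n; apply/eqP => t0; move: st; rewrite t0 mul0n => s00; rewrite s00 in s0.
move/congA0P: hc => /(_ (p ^ e)%N (s - p ^ e)%N qr).
rewrite ltn_subrL q0 s0 => /(_ isT).
rewrite coef_u leq_subr subKn // coefMXn ltnn subnn coef_1X bin0.
rewrite bin_sub // st mulnC => /eqP; rewrite -mulr_natl mulr1.
by apply/negP; apply: binom_nz.
Qed.


End PC.

Section PS.
Variable F : fieldType.
Local Notation PP := {poly {poly F}}.
Local Notation t := (xA F + yA F).

Lemma evalT_sum (g : {poly F}) n : (size g <= n)%N ->
  evalT g = \sum_(j < n) (g`_j)%:P%:P * t ^+ j.
Proof.
move=> hg; rewrite /evalT (horner_coef_wide _ (leq_trans (size_poly _ _) hg)).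
apply: eq_bigr => j _; rewrite coef_poly; case: ltnP => // gj; rewrite nth_default // !rmorph0.
Qed.

Lemma takeC (g : {poly F}) r :
  (take_poly r g)%:P = \sum_(i < r) (g`_i)%:P%:P * xA F ^+ i :> PP.
Proof.
rewrite /take_poly poly_def rmorph_sum; apply: eq_bigr => i _.
by rewrite -mul_polyC rmorphM /= xAn.
Qed.

Lemma spanA r s (a : PP) : exists f : 'I_r -> {poly F},
  congA r s a (\sum_(i < r) xA F ^+ i * evalT (f i)).
Proof.
set R := a \Po ('X - xA F).
have aR : a = R \Po t.
  rewrite /R -comp_polyA comp_polyB comp_polyX /xA comp_polyC /yA.
  by rewrite addrC addKr comp_polyXr.
exists (fun i => \poly_(j < size R) (R`_j)`_i).
have -> : \sum_(i < r) xA F ^+ i * evalT (\poly_(j < size R) (R`_j)`_i)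
   = \sum_(j < size R) (take_poly r R`_j)%:P * t ^+ j.
  under eq_bigr do rewrite (evalT_sum (size_poly _ _)) mulr_sumr.
  rewrite exchange_big /=; apply: eq_bigr => j _.
  rewrite takeC mulr_suml; apply: eq_bigr => i _.
  by rewrite coef_poly ltn_ord mulrCA mulrA.
rewrite /congA; exists (\sum_(j < size R) (drop_poly r R`_j)%:P * t ^+ j), 0.
rewrite mulr0 addr0 {1}aR comp_polyE -sumrB mulr_sumr; apply: eq_bigr => j _.
rewrite -mul_polyC -mulrBl mulrA; congr (_ * _).
by rewrite -rmorphB /= -{1}(poly_take_drop r R`_j) addrC addKr rmorphM /= xAn mulrC.
Qed.

End PS.

Section PT.
Variable F : fieldType.
Local Notation PP := {poly {poly F}}.

Lemma coef_sumC (I : finType) (c : I -> F) (w : I -> PP) al be :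
  ((\sum_i (c i)%:P%:P * w i)`_be)`_al = \sum_i c i * ((w i)`_be)`_al.
Proof.
rewrite coef_sum coef_sum; apply: eq_bigr => i _.
by rewrite coefCM coefCM.
Qed.

Lemma triang (I : finType) r s (a b : I -> nat) (w : I -> PP) (c : I -> F) :
  (forall i, a i < r)%N -> (forall i, b i < s)%N ->
  (forall i j, a i = a j -> b i = b j -> i = j) ->
  (forall i, ((w i)`_(b i))`_(a i) = 1) ->
  (forall i al be, ((w i)`_be)`_al != 0 ->
       (be < b i)%N \/ (be = b i /\ (a i <= al)%N)) ->
  congA r s (\sum_i (c i)%:P%:P * w i) 0 -> forall i, c i = 0.
Proof.
move=> har hbs inj w1 wtri /congA0P hc i0; apply/eqP/negPn/negP => nz.
pose k i := (b i * r + (r - a i))%N.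
case: (@arg_maxnP I i0 (fun i => c i != 0) k nz) => j cj jmax.
have := hc (a j) (b j) (har j) (hbs j).
rewrite coef_sumC (bigD1 j) //= w1 mulr1 big1 ?addr0; first by apply/eqP.
move=> i nij; case: (eqVneq (c i) 0) => [->|ci]; first by rewrite mul0r.
case: (eqVneq ((w i)`_(b j))`_(a j) 0) => [->|wz]; first by rewrite mulr0.
have := jmax i ci; rewrite /k.
have := har i; have := har j.
case: (wtri i _ _ wz) => [lt | [eb le]] hj hi hk.
  exfalso; nia.
exfalso; move/eqP: nij; apply; apply: inj => //; lia.
Qed.

End PT.

Section PI.
Variable F : fieldType.
Local Notation PP := {poly {poly F}}.

Lemma congA_D r s (P Q : PP) : congA r s P 0 -> congA r s Q 0 -> congA r s (P + Q) 0.
Proof.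
move=> [U1 [V1]]; rewrite subr0 => ->; move=> [U2 [V2]]; rewrite subr0 => ->.
by rewrite /congA subr0; exists (U1 + U2), (V1 + V2); rewrite !mulrDr; ring.
Qed.

Lemma congA_N r s (P : PP) : congA r s P 0 -> congA r s (- P) 0.
Proof.
move=> [U1 [V1]]; rewrite subr0 => ->.
by rewrite /congA subr0; exists (- U1), (- V1); rewrite !mulrN opprD.
Qed.

Lemma congA_00 r s : congA r s (0 : PP) 0.
Proof. by exists 0, 0; rewrite !mulr0 subr0 addr0. Qed.

Lemma congA_sum r s (I : finType) (f : I -> PP) :
  (forall i, congA r s (f i) 0) -> congA r s (\sum_i f i) 0.
Proof.
move=> h; elim/big_ind: _ => //; [exact: congA_00 | exact: congA_D].
Qed.

Lemma indep_lin (c d : {poly F}) (hc : c`_0 = 1) r s (k : 'I_r -> 'I_s -> F) :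
  congA r s (\sum_(ij : 'I_r * 'I_s) (k ij.1 ij.2)%:P%:P *
      (xA F ^+ ij.1 * ('X * c%:P + d%:P) ^+ ij.2)) 0 -> forall i j, k i j = 0.
Proof.
move=> h i j.
have := @triang F _ r s (fun ij : 'I_r * 'I_s => nat_of_ord ij.1) (fun ij : 'I_r * 'I_s => nat_of_ord ij.2)
  (fun ij => xA F ^+ ij.1 * ('X * c%:P + d%:P) ^+ ij.2) (fun ij => k ij.1 ij.2).
move=> /(_ _ _ _ _ _ h (i, j)) /=; apply.
- by move=> [a b].
- by move=> [a b].
- by move=> [a b] [a' b'] /= /val_inj -> /val_inj ->.
- by move=> [a b] /=; case: (tri_lin d a b hc).
- by move=> [a b] al be /=; case: (tri_lin d a b hc) => _; apply.
Qed.


Lemma A3 p (hchar : p \in [pchar F]) r s m (hm : (r <= p ^ m)%N) (hd : (p ^ m %| s)%N)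
  (f : 'I_r -> {poly F}) :
  congA r s (\sum_(i < r) xA F ^+ i * evalT (f i)) 0 ->
  forall i : 'I_r, congA r s (xA F ^+ i * evalT (f i)) 0.
Proof.
move=> h.
pose T i := \sum_(j < s) (((f i)`_j)%:P%:P * (xA F + yA F) ^+ j).
have h1 : forall i : 'I_r, congA r s (xA F ^+ i * evalT (f i) - xA F ^+ i * T i) 0.
  move=> i; rewrite (evalT_sum (leq_addl s (size (f i)))) big_split_ord /=.
  rewrite -mulrBr /T /= [X in X - _]addrC addrK mulr_sumr; apply: congA_sum => k.
  rewrite exprD.
  have -> : forall (a b c e : PP), a * (b * (c * e)) = (c * (a * b * e)) by move=> *; ring.
  by apply: congAM; apply: (A1 hchar hm hd).
have h2 : congA r s (\sum_(i < r) xA F ^+ i * T i) 0.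
  have -> : \sum_(i < r) xA F ^+ i * T i = \sum_(i < r) xA F ^+ i * evalT (f i)
       - \sum_(i < r) (xA F ^+ i * evalT (f i) - xA F ^+ i * T i).
    by rewrite -sumrB; apply: eq_bigr => i _; rewrite subKr.
  by apply: congA_D h (congA_N (congA_sum h1)).
have h1c : (1 : {poly F})`_0 = 1 by rewrite coef1.
have h3 : forall i (j : 'I_s), (f i)`_j = 0.
  have := @indep_lin 1 ('X) h1c r s (fun i j => (f i)`_j); apply.
  move: h2; rewrite /T; under eq_bigr do rewrite mulr_sumr.
  rewrite pair_big /= -tE.
  by under eq_bigr do rewrite mulrCA; exact: id.
move=> i; have := h1 i.
have -> : T i = 0 by apply: big1 => j _; rewrite h3 !rmorph0 mul0r.
by rewrite mulr0 subr0.
Qed.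

End PI.

Section PM.
Variable F : fieldType.
Local Notation PP := {poly {poly F}}.
Variables r s : nat.

Definition phi (P : PP) : 'rV[F]_(r * s) :=
  \row_k ((P`_((mxtens_unindex k).2))`_((mxtens_unindex k).1)).

Lemma phiE P i j : phi P 0 (mxtens_index (i, j)) = (P`_j)`_i.
Proof. by rewrite mxE mxtens_indexK. Qed.

Lemma phi_eq0 P : phi P = 0 <-> congA r s P 0.
Proof.
rewrite congA0P; split.
  move=> /rowP H i j ir js.
  by have := H (mxtens_index (Ordinal ir, Ordinal js)); rewrite phiE mxE.
move=> H; apply/rowP => k; case: (mxtens_indexP k) => i j.
by rewrite phiE mxE H.
Qed.

Lemma phiD P Q : phi (P + Q) = phi P + phi Q.
Proof. by apply/rowP => k; rewrite !mxE !coefD. Qed.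

Lemma phiN P : phi (- P) = - phi P.
Proof. by apply/rowP => k; rewrite !mxE !coefN. Qed.

Lemma phiB P Q : phi (P - Q) = phi P - phi Q.
Proof. by rewrite phiD phiN. Qed.

Lemma phi0 : phi 0 = 0.
Proof. by apply/rowP => k; rewrite !mxE !coef0. Qed.

Lemma phiZ c P : phi (c%:P%:P * P) = c *: phi P.
Proof. by apply/rowP => k; rewrite !mxE !coefCM. Qed.

Lemma phi_sum (I : finType) (f : I -> PP) : phi (\sum_i f i) = \sum_i phi (f i).
Proof.
exact: (big_morph _ phiD phi0).
Qed.

Lemma sum_tens (f : 'I_(r * s) -> F) :
  \sum_k f k = \sum_(i < r) \sum_(j < s) f (mxtens_index (i, j)).
Proof.
rewrite pair_big /= (reindex (@mxtens_index r s)) /=; last first.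
  by exists (@mxtens_unindex r s) => x _; rewrite ?mxtens_indexK ?mxtens_unindexK.
by apply: eq_bigr => -[i j].
Qed.

Lemma sum_delta n (f : 'I_n -> F) (b : 'I_n) : \sum_j f j * (j == b)%:R = f b.
Proof.
rewrite (bigD1 b) //= eqxx mulr1 big1 ?addr0 // => j /negPf ->.
by rewrite mulr0.
Qed.

Lemma sumJ n (f : nat -> F) (a : 'I_n) :
  \sum_(i < n) f i * (((i == a :> nat) || (a == i.+1 :> nat)))%:R
   = f a + (if (a == 0 :> nat) then 0 else f a.-1).
Proof.
have -> : \sum_(i < n) f i * (((i == a :> nat) || (a == i.+1 :> nat)))%:R
  = \sum_(i < n) f i * (i == a :> nat)%:R + \sum_(i < n) f i * (a == i.+1 :> nat)%:R.
  rewrite -big_split /=; apply: eq_bigr => i _.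
  case: (eqVneq (i:nat) a) => [<-|_]; last by rewrite /= mulr0 add0r.
  by rewrite (ltn_eqF (ltnSn i)) /= mulr0 addr0.
congr (_ + _).
  under eq_bigr do rewrite mulr_natr mulrb.
  by rewrite -big_mkcond big_ord1_eq ltn_ord.
case: a => [[|a] ha] /=.
  by rewrite big1 // => i _; rewrite mulr0.
under eq_bigr do rewrite mulr_natr mulrb eqSS eq_sym.
by rewrite -big_mkcond big_ord1_eq ltnW.
Qed.


Lemma phiX P : phi P *m (jordan_mx F r *t 1%:M) = phi (P * (1 + xA F)).
Proof.
apply/rowP => k; case: (mxtens_indexP k) => a b.
rewrite mxE sum_tens phiE.
under eq_bigr do under eq_bigr do rewrite phiE tensmxE !mxE mulrA.
under eq_bigr do rewrite (sum_delta (fun j => (P`_j)`__ * _)).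
rewrite (sumJ (fun i => P`_b`_i)) mulrDr mulr1 coefD /xA coefMC coefD coefMX.
by case: (a : nat).
Qed.

Lemma phiY P : phi P *m (1%:M *t jordan_mx F s) = phi (P * (1 + yA F)).
Proof.
apply/rowP => k; case: (mxtens_indexP k) => a b.
rewrite mxE sum_tens phiE.
under eq_bigr do under eq_bigr do rewrite phiE tensmxE !mxE.
rewrite (eq_bigr (fun i : 'I_r => (\sum_(j < s) P`_j`_i * ((j == b :> nat) || (b == j.+1 :> nat))%:R) * (i == a)%:R)); last first.
  by move=> i _; rewrite mulr_suml; apply: eq_bigr => j _; rewrite mulrCA mulrC.
rewrite (sum_delta (fun i : 'I_r => \sum_(j < s) P`_j`_i * _)).
rewrite (sumJ (fun j => P`_j`_a)) mulrDr mulr1 coefD /yA coefMX.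
by case: (b : nat) => [|b'] /=; rewrite ?coef0 ?addr0 // coefD.
Qed.


Lemma JJE : JJ F r s = (jordan_mx F r *t 1%:M) *m (1%:M *t jordan_mx F s).
Proof. by rewrite /JJ tensmx_mul mulmx1 mul1mx. Qed.

Lemma phiJJ P : phi P *m JJ F r s = phi (P * ((1 + xA F) * (1 + yA F))).
Proof. by rewrite JJE mulmxA phiX phiY mulrA. Qed.


Lemma phiU P : phi P *m (JJ F r s - 1%:M) = phi (P * uA F).
Proof. by rewrite mulmxBr mulmx1 phiJJ /uA mulrBr mulr1 phiB. Qed.

Lemma phiUn P n : phi P *m (JJ F r s - 1%:M) ^+ n = phi (P * uA F ^+ n).
Proof.
elim: n P => [|n IH] P; first by rewrite !expr0 mulr1 mulmx1.
by rewrite exprS -mulmxE mulmxA phiU IH exprS mulrA.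
Qed.

End PM.

Section PG.
Variable F : fieldType.

Lemma sq_inv N M (P : 'M[F]_(N, M)) : N = M -> row_free P ->
  exists Q : 'M[F]_(M, N), P *m Q = 1%:M /\ Q *m P = 1%:M.
Proof.
move=> e; subst N => hP; exists (invmx P).
by rewrite mulmxV ?mulVmx // -row_free_unit.
Qed.

Lemma mxdiagM n (p_ : 'I_n -> nat) (A B : forall i, 'M[F]_(p_ i)) :
  mxdiag A *m mxdiag B = mxdiag (fun i => A i *m B i).
Proof.
rewrite {2}/mxdiag mul_mxdiag_mxblock /mxdiag; apply: eq_mxblock => i j.
case: eqVneq => [<-|_]; last by rewrite mulmx0.
by rewrite !conform_mx_id.
Qed.

Lemma mxdiagX n (p_ : 'I_n -> nat) (A : forall i, 'M[F]_(p_ i)) k :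
  (mxdiag A) ^+ k = mxdiag (fun i => A i ^+ k).
Proof.
elim: k => [|k IH].
  rewrite expr0; transitivity (mxdiag (fun i => (1%:M : 'M[F]_(p_ i)))); first by rewrite mxdiagZ.
  by apply: eq_mxdiag => i; rewrite expr0.
by rewrite exprS -mulmxE IH mxdiagM; apply: eq_mxdiag => i; rewrite exprS mulmxE.
Qed.

Lemma sumJr n (f : nat -> F) (j : 'I_n) :
  \sum_(l < n) (((j == l :> nat) || (l == j.+1 :> nat)))%:R * f l
   = f j + (if (j.+1 < n)%N then f j.+1 else 0).
Proof.
have -> : \sum_(l < n) (((j == l :> nat) || (l == j.+1 :> nat)))%:R * f l
  = \sum_(l < n) (l == j :> nat)%:R * f l + \sum_(l < n) (l == j.+1 :> nat)%:R * f l.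
  rewrite -big_split /=; apply: eq_bigr => l _.
  case: (eqVneq (l:nat) j) => [->|nlj]; last by rewrite /= mul0r add0r.
  by rewrite /= (ltn_eqF (ltnSn j)) /= mul0r addr0.
congr (_ + _).
  under eq_bigr do rewrite mulr_natl mulrb.
  by rewrite -big_mkcond big_ord1_eq ltn_ord.
under eq_bigr do rewrite mulr_natl mulrb.
by rewrite -big_mkcond big_ord1_eq.
Qed.

Lemma nilJ_entry n k (i j : 'I_n) : ((jordan_mx F n - 1) ^+ k) i j = (j == (i + k)%N :> nat)%:R.
Proof.
elim: k i j => [|k IH] i j.
  by rewrite expr0 addn0 mxE eq_sym.
rewrite exprSr -mulmxE mxE.
under eq_bigr do rewrite IH !mxE.
have -> : \sum_(l < n) (l == (i + k)%N :> nat)%:R *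
   ((((l == j :> nat) || (j == l.+1 :> nat)))%:R - (l == j :> nat)%:R)
   = \sum_(l < n) (if (l == (i + k)%N :> nat) then (j == (i + k).+1 :> nat)%:R else 0 : F).
  apply: eq_bigr => l _; case: eqP => [->|_]; last by rewrite mul0r.
  rewrite mul1r; case: (eqVneq (i + k)%N j) => [<-|_] /=; last by rewrite subr0.
  by rewrite (ltn_eqF (ltnSn _)) subrr.
rewrite -(big_mkcond (fun l : 'I_n => (l:nat) == (i+k)%N) (fun=> (j == (i + k).+1 :> nat)%:R)).
rewrite (big_ord1_eq _ (fun=> (j == (i + k).+1 :> nat)%:R) (i+k)%N n) addnS.
case: ltnP => // h.
by rewrite ltn_eqF // ltnS (leq_trans (ltnW (ltn_ord j)) h).
Qed.

Lemma nilJ n k : (n <= k)%N -> (jordan_mx F n - 1) ^+ k = 0.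
Proof.
move=> nk; apply/matrixP => i j; rewrite nilJ_entry mxE.
by rewrite ltn_eqF // (leq_trans (ltn_ord j)) // (leq_trans nk) // leq_addl.
Qed.

End PG.

Section PJ.
Variable F : fieldType.
Local Notation PP := {poly {poly F}}.
Variables (p : nat) (hchar : p \in [pchar F]) (r s m : nat).
Hypotheses (hr : (1 <= r)%N) (hrs : (r <= s)%N) (hm : (r <= p ^ m)%N)
  (hmmin : forall k : nat, (r <= p ^ k)%N -> (m <= k)%N).

Definition Pb (i n : nat) : 'M[F]_(n, r * s) :=
  \matrix_(j < n, k < r * s) phi r s (xA F ^+ i * uA F ^+ j) 0 k.

Lemma blk (hd : (p ^ m %| s)%N) i n : n = s ->
  Pb i n *m JJ F r s = jordan_mx F n *m Pb i n.
Proof.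
move=> ->; apply/matrixP => j k.
have -> : (Pb i s *m JJ F r s) j k = (phi r s (xA F ^+ i * uA F ^+ j) *m JJ F r s) 0 k.
  by rewrite !mxE; apply: eq_bigr => l _; rewrite !mxE.
rewrite phiJJ.
have -> : (1 + xA F) * (1 + yA F) = 1 + uA F by rewrite /uA [RHS]addrC subrK.
rewrite mulrDr mulr1 phiD -mulrA -exprSr mxE [in RHS]mxE.
under [in RHS]eq_bigr do rewrite mxE mxE.
rewrite (sumJr (fun l => phi r s (xA F ^+ i * uA F ^+ l) 0 k)).
case: ltnP => h //; congr (_ + _).
have -> : j.+1 = s by apply/eqP; rewrite eqn_leq h ltn_ord.
have : congA r s (xA F ^+ i * uA F ^+ s) 0.
  by rewrite mulrC; apply: congAM; apply: (U0 hchar hm hd).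
by move/phi_eq0 => ->; rewrite mxE.
Qed.


Lemma sorted_nseq_geq n (x : nat) : sorted geq (nseq n x).
Proof. by case: n => //= n; elim: n => //= n IH; rewrite leqnn. Qed.

Lemma sum_nseq : (\sum_(i < size (nseq r s)) nth 0%N (nseq r s) i = r * s)%N.
Proof.
rewrite size_nseq; under eq_bigr do rewrite nth_nseq ltn_ord.
by rewrite sum_nat_const card_ord.
Qed.

Lemma A5 (hd : (p ^ m %| s)%N) : jordan_type (JJ F r s) (nseq r s).
Proof.
set lam := nseq r s.
split; first exact: sorted_nseq_geq.
split; first by rewrite all_nseq (leq_trans hr hrs) orbT.
pose P := mxcol (fun i : 'I_(size lam) => Pb i (nth 0%N lam i)).
have hrow : forall k, row k P = phi r s (xA F ^+ tagnat.sig1 k * uA F ^+ tagnat.sig2 k).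
  by move=> k; rewrite row_mxcol; apply/rowP => l; rewrite !mxE.
have hfree : row_free P.
  apply/inj_row_free => v hv.
  have : congA r s (\sum_k (v 0 k)%:P%:P * (xA F ^+ tagnat.sig1 k * uA F ^+ tagnat.sig2 k)) 0.
    apply/phi_eq0; rewrite -hv phi_sum mulmx_sum_row.
    by apply: eq_bigr => k _; rewrite phiZ hrow.
  rewrite uE => hc; apply/rowP => k; rewrite mxE.
  have h1c : (1 + 'X : {poly F})`_0 = 1 by rewrite coefD coef1 coefX addr0.
  apply: (triang (a := fun k => nat_of_ord (tagnat.sig1 k)) (b := fun k => nat_of_ord (tagnat.sig2 k)) _ _ _ _ _ hc).
  - by move=> k'; rewrite -(size_nseq r s).
  - move=> k'; apply: leq_trans (ltn_ord (tagnat.sig2 k')) _.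
    by rewrite nth_nseq -[X in (_ < X)%N](size_nseq r s) ltn_ord.
  - move=> k1 k2 e1 e2; apply: val_inj => /=.
    rewrite (tagnat.rect k1) (tagnat.rect k2) e2.
    have -> : tagnat.sig1 k1 = tagnat.sig1 k2 by apply: val_inj.
    done.
  - by move=> k' /=; case: (tri_lin ('X : {poly F}) (tagnat.sig1 k') (tagnat.sig2 k') h1c).
  - by move=> k' al be /=; case: (tri_lin ('X : {poly F}) (tagnat.sig1 k') (tagnat.sig2 k') h1c) => _; apply.
have [Q [PQ QP]] := sq_inv sum_nseq hfree.
have PJ : P *m JJ F r s = jordan_blocks F lam *m P.
  rewrite /jordan_blocks mul_mxdiag_mxcol mxcol_mul; apply: eq_mxcol => i.
  by apply: blk => //; rewrite nth_nseq -(size_nseq r s) ltn_ord.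
exists P, Q; split => //; split => //.
by rewrite PJ -mulmxA PQ mulmx1.
Qed.


Lemma Bpart lam : jordan_type (JJ F r s) lam -> deviation s lam = nseq r 0 ->
  (p ^ m %| s)%N.
Proof.
move=> [_ [_ [P [Q [PQ [QP PJQ]]]]]] hdev.
have hsz : size lam = r by have := congr1 size hdev; rewrite size_map size_nseq.
have hl : forall i, (i < size lam)%N -> nth 0%N lam i = s.
  move=> i hi; have := congr1 (fun l => nth (0 : int) l i) hdev.
  rewrite /deviation (nth_map 0%N) // nth_nseq -hsz hi.
  by move/eqP; rewrite subr_eq0 eqz_nat => /eqP.
set Jb := jordan_blocks F lam in PJQ.
have JJE : JJ F r s = Q *m Jb *m P.
  by rewrite -PJQ !mulmxA QP mul1mx -mulmxA QP mulmx1.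
have U : JJ F r s - 1%:M = Q *m (Jb - 1%:M) *m P.
  by rewrite JJE mulmxBr mulmx1 mulmxBl QP.
have Un : forall k, (JJ F r s - 1%:M) ^+ k = Q *m (Jb - 1%:M) ^+ k *m P.
  elim=> [|k IH]; first by rewrite !expr0 mulmx1 QP.
  rewrite exprS -mulmxE IH U exprS -mulmxE.
  by rewrite !mulmxA -[Q *m _ *m P *m Q]mulmxA PQ mulmx1.
have Z : (Jb - 1%:M) ^+ s = 0.
  rewrite /Jb /jordan_blocks -(mxdiagZ (p_ := fun i : 'I_(size lam) => nth 0%N lam i) 1).
  rewrite -mxdiagB mxdiagX -[RHS](mxdiag0 (p_ := fun i : 'I_(size lam) => nth 0%N lam i)).
  by apply: eq_mxdiag => i; apply: nilJ; rewrite hl.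
have : phi r s 1 *m (JJ F r s - 1%:M) ^+ s = 0 by rewrite Un Z mulmx0 mul0mx mulmx0.
rewrite phiUn mul1r => /phi_eq0.
exact: (Bn hchar hr hrs hmmin).
Qed.

End PJ.

Theorem lemma10 (F : fieldType) (p : nat) (hp : prime p) (hchar : p \in [pchar F])
  (r s m : nat) (hr : (1 <= r)%N) (hrs : (r <= s)%N)
  (hm : (r <= p ^ m)%N) (hmmin : forall k : nat, (r <= p ^ k)%N -> (m <= k)%N) :
  (* (a) *)
  ((p ^ m %| s)%N ->
     congA r s ((xA F + yA F) ^+ s) 0
     /\ (forall a : {poly {poly F}}, exists f : 'I_r -> {poly F},
           congA r s a (\sum_(i < r) xA F ^+ i * evalT (f i)))
     /\ (forall f : 'I_r -> {poly F},
           congA r s (\sum_(i < r) xA F ^+ i * evalT (f i)) 0 ->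
           forall i : 'I_r, congA r s (xA F ^+ i * evalT (f i)) 0)
     /\ (forall i : nat, (i < r)%N ->
           ~ congA r s (xA F ^+ i * (xA F + yA F) ^+ s.-1) 0)
     /\ (exists lam : seq nat, jordan_type (JJ F r s) lam
           /\ deviation s lam = nseq r 0))
  /\
  (* (b) *)
  (forall lam : seq nat, jordan_type (JJ F r s) lam ->
     deviation s lam = nseq r 0 -> (p ^ m %| s)%N).
Proof.
Proof.
split.
  move=> hd; split; first exact: (A1 hchar hm hd).
  split; first by move=> a; exact: spanA.
  split; first by move=> f; exact: (A3 hchar hm hd).
  split; first by move=> i ir; exact: (A4 hr hrs ir).
  exists (nseq r s); split; first exact: (A5 hchar hr hrs hm hd).
  by rewrite /deviation map_nseq subrr.
move=> lam hj hdev; by apply: (Bpart hchar hr hrs hmmin hj hdev).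
Qed.
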